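(* Let $X$ be $\mathbf{S}^2\times\mathbb{R}$ or $\mathbf{H}^2\times\mathbb{R}$ in the projective model described in the context, and let $P=(1,x,y,z)$ with $x,y,z\in\mathbb{R}$ and $x^2+y^2+z^2>0$ in $\mathbf{S}^2\times\mathbb{R}$, respectively $x^2-y^2-z^2>0$, $x>0$ in $\mathbf{H}^2\times\mathbb{R}$. Then the translation curve drawn from $E_0=(1,1,0,0)$ to $P$ has at $E_0$ the tangent vector \[ \tau\cdot\mathbf{t}_P=\left(\tfrac12\ln\big(x^2\pm(y^2+z^2)\big),\ \frac{y\,\mathrm{arcC}\Big(\frac{x}{\sqrt{x^2\pm(y^2+z^2)}}\Big)}{\sqrt{y^2+z^2}},\ \frac{z\,\mathrm{arcC}\Big(\frac{x}{\sqrt{x^2\pm(y^2+z^2)}}\Big)}{\sqrt{y^2+z^2}}\right), \] where $\pm$ is $+$ and $\mathrm{arcC}=\arccos$ for $\mathbf{S}^2\times\mathbb{R}$, $\pm$ is $-$ and $\mathrm{arcC}=\mathrm{arccosh}$ for $\mathbf{H}^2\times\mathbb{R}$, $\mathbf{t}_P$ is the unit initial tangent vector and $\tau$ is the translation distance of $P$ and $E_0$.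
   Context: Points are written in homogeneous coordinates $(1,x,y,z)$; $\mathbf{S}^2\times\mathbb{R}$ is the set of such points with $x^2+y^2+z^2>0$ and $\mathbf{H}^2\times\mathbb{R}$ the set with $x^2-y^2-z^2>0$, $x>0$. Let $S,C$ denote $\sin,\cos$ in $\mathbf{S}^2\times\mathbb{R}$ and $\sinh,\cosh$ in $\mathbf{H}^2\times\mathbb{R}$. The translation curves (which coincide with geodesics) starting at $E_0=(1,1,0,0)$ are, with arc-length $\tau\ge0$ and parameters $-\pi<u\le\pi$, $-\pi/2\le v\le\pi/2$: $x(\tau)=e^{\tau\sin v}C(\tau\cos v)$, $y(\tau)=e^{\tau\sin v}S(\tau\cos v)\cos u$, $z(\tau)=e^{\tau\sin v}S(\tau\cos v)\sin u$. Their unit tangent vector at $E_0$ is $\mathbf{t}=(\sin v,\cos v\cos u,\cos v\sin u)$. *)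

(* Defs.v *)
From Stdlib Require Import Reals.
Open Scope R_scope.

Inductive geom := S2xR | H2xR.

Definition Sf (g : geom) (t : R) : R := match g with S2xR => sin t | H2xR => sinh t end.
Definition Cf (g : geom) (t : R) : R := match g with S2xR => cos t | H2xR => cosh t end.

Definition sgn (g : geom) : R := match g with S2xR => 1 | H2xR => -1 end.

Definition arccosh (x : R) : R := ln (x + sqrt (x ^ 2 - 1)).
Definition arcC (g : geom) (x : R) : R := match g with S2xR => acos x | H2xR => arccosh x end.

(* Points (1,x,y,z) of the model space *)
Definition in_space (g : geom) (x y z : R) : Prop :=
  match g with
  | S2xR => x ^ 2 + y ^ 2 + z ^ 2 > 0
  | H2xR => x ^ 2 - y ^ 2 - z ^ 2 > 0 /\ x > 0
  end.

(* translation curve from E0 = (1,1,0,0) with parameters u, v, at arc-length tau: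
   returns the (x,y,z) coordinates *)
Definition tcurve (g : geom) (u v tau : R) : R * R * R :=
  (exp (tau * sin v) * Cf g (tau * cos v),
   exp (tau * sin v) * Sf g (tau * cos v) * cos u,
   exp (tau * sin v) * Sf g (tau * cos v) * sin u).

Definition tvec (u v : R) : R * R * R := (sin v, cos v * cos u, cos v * sin u).

Definition scal3 (a : R) (p : R * R * R) : R * R * R :=
  let '(p1, p2, p3) := p in (a * p1, a * p2, a * p3).

Definition param_ok (u v tau : R) : Prop :=
  0 <= tau /\ - PI < u <= PI /\ - (PI / 2) <= v <= PI / 2.

Definition tangent_formula (g : geom) (x y z : R) : R * R * R :=
  let q := x ^ 2 + sgn g * (y ^ 2 + z ^ 2) in
  let r := sqrt (y ^ 2 + z ^ 2) in
  let a := arcC g (x / sqrt q) in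
  (/ 2 * ln q, y * a / r, z * a / r).

(* Main.v *)
Require Import Defs.
From Stdlib Require Import Reals Lra Psatz.
Open Scope R_scope.

Lemma CS_id g t : Cf g t ^ 2 + sgn g * Sf g t ^ 2 = 1.
Proof.
destruct g; simpl.
- pose proof (sin2_cos2 t). unfold Rsqr in *. nra.
- unfold cosh, sinh. assert (exp t * exp (- t) = 1).
  { rewrite <- exp_plus. replace (t + - t) with 0 by ring. apply exp_0. }
  nra.
Qed.

Lemma sinh_ge0 t : 0 <= t -> 0 <= sinh t.
Proof.
intro H. unfold sinh. destruct (Rle_lt_or_eq_dec 0 t H) as [H1|H1].
- assert (exp (- t) < exp t) by (apply exp_increasing; lra). lra.
- subst. replace (-0) with 0 by ring. lra.
Qed.

Lemma S_ge0 g t : 0 <= t -> (g = S2xR -> t <= PI) -> 0 <= Sf g t.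
Proof.
intros H1 H2. destruct g; simpl.
- apply sin_ge_0; auto.
- now apply sinh_ge0.
Qed.

Lemma arcC_C g t : 0 <= t -> (g = S2xR -> t <= PI) -> arcC g (Cf g t) = t.
Proof.
intros H1 H2. destruct g; simpl.
- apply acos_cos; auto.
- unfold arccosh.
  pose proof (CS_id H2xR t) as E; simpl in E.
  replace (cosh t ^ 2 - 1) with (sinh t ^ 2) by lra.
  rewrite sqrt_pow2 by (now apply sinh_ge0).
  unfold cosh, sinh. replace ((exp t + exp (- t)) / 2 + (exp t - exp (- t)) / 2) with (exp t) by field.
  apply ln_exp.
Qed.

Lemma forward g x y z u v tau :
  y ^ 2 + z ^ 2 > 0 ->
  param_ok u v tau -> tcurve g u v tau = (x, y, z) ->
  (g = S2xR -> tau * cos v <= PI) ->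
  scal3 tau (tvec u v) = tangent_formula g x y z.
Proof.
intros Hr [Ht [Hu Hv]] Hc HS.
unfold tcurve in Hc. injection Hc as Hx Hy Hz.
set (E := exp (tau * sin v)) in *.
set (rho := tau * cos v) in *.
assert (HE : 0 < E) by apply exp_pos.
assert (Hcv : 0 <= cos v) by (apply cos_ge_0; lra).
assert (Hrho : 0 <= rho) by (unfold rho; nra).
assert (HSg := S_ge0 g rho Hrho HS).
pose proof (CS_id g rho) as HCS.
pose proof (sin2_cos2 u) as Hu2. unfold Rsqr in Hu2.
assert (Hq : x ^ 2 + sgn g * (y ^ 2 + z ^ 2) = E ^ 2).
{ subst x y z. transitivity (E^2 * (Cf g rho ^ 2 + sgn g * Sf g rho ^ 2 * (sin u * sin u + cos u * cos u))); [ring|].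
  rewrite Hu2, Rmult_1_r, HCS. ring. }
assert (Hyz : y ^ 2 + z ^ 2 = (E * Sf g rho) ^ 2).
{ subst y z. transitivity ((E * Sf g rho) ^ 2 * (sin u * sin u + cos u * cos u)); [ring|].
  rewrite Hu2. ring. }
assert (HS0 : Sf g rho <> 0).
{ intro H0. rewrite H0 in Hyz. lra. }
unfold tangent_formula, scal3, tvec. cbv zeta.
rewrite Hq, Hyz, sqrt_pow2 by lra. rewrite sqrt_pow2 by (apply Rmult_le_pos; lra).
replace (x / E) with (Cf g rho) by (subst x; field; lra).
rewrite arcC_C by auto.
replace (E ^ 2) with (E * E) by ring. rewrite ln_mult by lra. unfold E at 1 2. rewrite ln_exp.
f_equal; [f_equal|].
- field.
- rewrite <- Hy; unfold rho; field; repeat split; auto; lra.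
- rewrite <- Hz; unfold rho; field; repeat split; auto; lra.
Qed.
Lemma polar a b : a ^ 2 + b ^ 2 = 1 -> exists u, - PI < u <= PI /\ cos u = a /\ sin u = b.
Proof.
intro H.
assert (Ha : -1 <= a <= 1) by nra.
assert (Hs : sin (acos a) = Rabs b).
{ rewrite sin_acos by auto. rewrite <- sqrt_Rsqr_abs. f_equal. unfold Rsqr. lra. }
pose proof (acos_bound a) as Hb. pose proof PI_RGT_0.
destruct (Rle_dec 0 b) as [Hz|Hz].
- exists (acos a). rewrite Rabs_pos_eq in Hs by auto. repeat split; try lra. now apply cos_acos.
- exists (- acos a). rewrite Rabs_left in Hs by (apply Rnot_le_lt; exact Hz).
  rewrite cos_neg, sin_neg, Hs, cos_acos by auto. repeat split; try lra.
  destruct (Req_dec (acos a) PI) as [E|E]; [|lra].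
  rewrite E, sin_PI in Hs. lra.
Qed.

Lemma vpolar h rho : 0 < rho -> exists tau v, 0 < tau /\ - (PI / 2) <= v <= PI / 2 /\
  tau * sin v = h /\ tau * cos v = rho.
Proof.
intro Hr.
set (tau := sqrt (h ^ 2 + rho ^ 2)).
assert (Ht2 : tau ^ 2 = h ^ 2 + rho ^ 2) by (apply pow2_sqrt; nra).
assert (Ht : 0 < tau) by (apply sqrt_lt_R0; nra).
assert (Hb : -1 <= h / tau <= 1).
{ assert (-tau <= h <= tau) by nra.
  assert (Hi : tau * / tau = 1) by (field; lra).
  assert (0 < / tau) by (apply Rinv_0_lt_compat; lra).
  unfold Rdiv. split; nra. }
exists tau, (asin (h / tau)). repeat split; try apply asin_bound; try lra.
- rewrite sin_asin by auto. field; lra.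
- rewrite cos_asin by auto.
  replace (1 - (h / tau)²) with ((rho / tau) ^ 2).
  2:{ unfold Rsqr. replace ((rho / tau) ^ 2) with (rho ^ 2 / tau ^ 2) by (field; lra).
      replace (h / tau * (h / tau)) with (h ^ 2 / tau ^ 2) by (field; lra).
      rewrite Ht2. field. nra. }
  rewrite sqrt_pow2. field; lra. apply Rlt_le, Rdiv_lt_0_compat; lra.
Qed.

Lemma key g w s : w ^ 2 + sgn g * s ^ 2 = 1 -> 0 < s -> (g = H2xR -> 0 < w) ->
  exists rho, 0 < rho /\ (g = S2xR -> rho <= PI) /\ Cf g rho = w /\ Sf g rho = s.
Proof.
intros H Hs Hw. destruct g; simpl in *.
- assert (Ha : -1 <= w <= 1) by nra.
  pose proof (acos_bound w).
  assert (E : sin (acos w) = s).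
  { rewrite sin_acos by auto. rewrite <- (sqrt_pow2 s) by lra. f_equal. unfold Rsqr. lra. }
  exists (acos w). repeat split; try lra; [| now apply cos_acos].
  destruct (Req_dec (acos w) 0) as [E0|E0]; [|lra].
  rewrite E0, sin_0 in E. lra.
- specialize (Hw eq_refl).
  assert (Hp : 1 < w + s) by nra.
  assert (Hinv : exp (- ln (w + s)) = w - s).
  { rewrite exp_Ropp, exp_ln by lra. field_simplify_eq; [nra|lra]. }
  exists (ln (w + s)). repeat split; try discriminate.
  + rewrite <- ln_1. apply ln_increasing; lra.
  + unfold cosh. rewrite Hinv, exp_ln by lra. field.
  + unfold sinh. rewrite Hinv, exp_ln by lra. field.
Qed.

Theorem lemma4p9 (g : geom) (x y z : R) :
  in_space g x y z ->
  y ^ 2 + z ^ 2 > 0 ->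
  (exists u v tau : R,
      param_ok u v tau /\ tcurve g u v tau = (x, y, z) /\
      (g = S2xR -> tau * cos v <= PI) /\
      scal3 tau (tvec u v) = tangent_formula g x y z) /\
  (forall u v tau : R,
      param_ok u v tau -> tcurve g u v tau = (x, y, z) ->
      (g = S2xR -> tau * cos v <= PI) ->
      scal3 tau (tvec u v) = tangent_formula g x y z).
Proof.
intros Hin Hr. split; [|intros; eapply forward; eauto].
set (q := x ^ 2 + sgn g * (y ^ 2 + z ^ 2)).
assert (Hq : 0 < q) by (unfold q; destruct g; simpl in *; nra).
set (r := sqrt (y ^ 2 + z ^ 2)).
assert (Hr0 : 0 < r) by (apply sqrt_lt_R0; lra).
assert (Hr2 : r ^ 2 = y ^ 2 + z ^ 2) by (apply pow2_sqrt; lra).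
set (sq := sqrt q).
assert (Hs0 : 0 < sq) by (apply sqrt_lt_R0; lra).
assert (Hs2 : sq ^ 2 = q) by (apply pow2_sqrt; lra).
destruct (key g (x / sq) (r / sq)) as [rho [Hrho [HSr [HC HSf]]]].
{ replace ((x / sq) ^ 2 + sgn g * (r / sq) ^ 2) with ((x ^ 2 + sgn g * r ^ 2) / sq ^ 2) by (field; lra).
  rewrite Hr2, Hs2. fold q. field. lra. }
{ apply Rdiv_lt_0_compat; lra. }
{ intro; subst g. destruct Hin. apply Rdiv_lt_0_compat; lra. }
destruct (vpolar (ln q / 2) rho Hrho) as [tau [v [Ht [Hv [Hsv Hcv]]]]].
destruct (polar (y / r) (z / r)) as [u [Hu [Hcu Hsu]]].
{ replace ((y / r) ^ 2 + (z / r) ^ 2) with ((y ^ 2 + z ^ 2) / r ^ 2) by (field; lra).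
  rewrite Hr2. field. lra. }
assert (HE : exp (tau * sin v) = sq).
{ rewrite Hsv. rewrite <- (sqrt_pow2 (exp (ln q / 2))) by (apply Rlt_le, exp_pos).
  unfold sq. f_equal. simpl. rewrite Rmult_1_r, <- exp_plus. replace (ln q / 2 + ln q / 2) with (ln q) by field.
  apply exp_ln; lra. }
assert (Hpo : param_ok u v tau) by (unfold param_ok; repeat split; lra).
assert (Hc : tcurve g u v tau = (x, y, z)).
{ unfold tcurve. rewrite HE, Hcv, HC, HSf, Hcu, Hsu. f_equal; [f_equal|]; field; lra. }
assert (HS : g = S2xR -> tau * cos v <= PI) by (rewrite Hcv; auto).
exists u, v, tau. split; [exact Hpo|split; [exact Hc|split; [exact HS|]]].
eapply forward; eauto.
Qed.
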